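(* Let $X$ be a non-empty finite set and $\mathcal{P}=\{P_1,\ldots,P_n\}$ a partition of $X$ indexed so that $|P_i|\le|P_{i+1}|$, with distinct block sizes $l_1<\cdots<l_r$. If $f\in\Sigma(X,\mathcal{P})$, then there exists a companion of $\overline{f}$ in the subsemigroup generated by $S(X,\mathcal{P})\cup\mathcal{B}$.
   Context: Maps are written on the right and composed left to right. $T(X,\mathcal{P})$ is the semigroup of maps $f:X\to X$ mapping each block of $\mathcal{P}$ into some block; $S(X,\mathcal{P})$ is its group of units; $\Sigma(X,\mathcal{P})$ is the set of $f\in T(X,\mathcal{P})$ whose image intersects every block. For $f\in T(X,\mathcal{P})$, $\overline{f}$ is the map on $\{1,\ldots,n\}$ with $(i)\overline{f}=j$ whenever $P_if\subseteq P_j$ (for $f\in\Sigma(X,\mathcal{P})$ this is a permutation). For $i\le r-1$, $\mathcal{B}_i$ is the set of $f\in\Sigma(X,\mathcal{P})$ for which there are blocks $P_j,P_{j'},P_k,P_{k'}$ (possibly $j=j'$ or $k=k'$) with $|P_j|=|P_{j'}|=l_i$, $|P_k|=|P_{k'}|=l_{i+1}$, such that $f$ maps $P_j$ injectively into $P_k$, maps $P_{k'}$ onto $P_{j'}$, and maps every other block bijectively onto a block of the same size; $\mathcal{B}=\bigcup_{i=1}^{r-1}\mathcal{B}_i$. For a permutation $\pi$ of $\{1,\ldots,n\}$, a companion of $\pi$ is a $g\in\Sigma(X,\mathcal{P})$ with $\overline{g}=\pi$ such that $g|_{P_i}:P_i\to P_{(i)\pi}$ is injective whenever $|P_i|\le|P_{(i)\pi}|$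 and surjective whenever $|P_i|\ge|P_{(i)\pi}|$. *)

(* Defs.v *)
From mathcomp Require Import all_boot.
Set Implicit Arguments. Unset Strict Implicit. Unset Printing Implicit Defensive.

(* A partition P = {P_0,...,P_(n-1)} of the finite set X is given by the
   block-assignment map blk : X -> 'I_n; P_i = block blk i.  Maps are
   finite functions {ffun X -> X}; composition is written left-to-right. *)

Section Defs.
Variables (X : finType) (n : nat) (blk : X -> 'I_n).

Definition block (i : 'I_n) : {set X} := [set x | blk x == i].

Definition rcomp (f g : {ffun X -> X}) : {ffun X -> X} := [ffun x => g (f x)].

Definition in_T (f : {ffun X -> X}) : Prop :=
  forall i, exists j, f @: block i \subset block j.

Definition in_Sigma (f : {ffun X -> X}) : Prop :=
  in_T f /\ forall i, exists x, f x \in block i.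

Definition in_S (f : {ffun X -> X}) : Prop :=
  in_T f /\ exists g, [/\ in_T g, rcomp f g = [ffun x => x]
                        & rcomp g f = [ffun x => x]].

Definition fbar (f : {ffun X -> X}) (i : 'I_n) : 'I_n :=
  odflt i [pick j | f @: block i \subset block j].

Definition block_sizes : seq nat :=
  sort leq (undup [seq #|block i| | i : 'I_n]).

Definition lsize (i : nat) : nat := nth 0 block_sizes i.

(* B_i (0-indexed: i = 0 .. r-2 corresponds to the paper's B_1 .. B_(r-1)) *)
Definition in_B_i (i : nat) (f : {ffun X -> X}) : Prop :=
  in_Sigma f /\
  exists j j' k k' : 'I_n,
    [/\ #|block j| = lsize i, #|block j'| = lsize i,
        #|block k| = lsize i.+1, #|block k'| = lsize i.+1 &
    [/\ f @: block j \subset block k, {in block j &, injective f},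
        f @: block k' = block j' &
        forall m : 'I_n, m != j -> m != k' ->
          exists m' : 'I_n, [/\ #|block m'| = #|block m|,
                                f @: block m = block m' &
                                {in block m &, injective f}]]].

Definition in_B (f : {ffun X -> X}) : Prop :=
  exists i, i.+1 < size block_sizes /\ in_B_i i f.

Definition companion (pi : 'I_n -> 'I_n) (g : {ffun X -> X}) : Prop :=
  [/\ in_Sigma g, (forall i, fbar g i = pi i) &
      forall i, (#|block i| <= #|block (pi i)| -> {in block i &, injective g})
             /\ (#|block (pi i)| <= #|block i| -> g @: block i = block (pi i))].

End Defs.

Inductive gen_sg (X : finType) (A : {ffun X -> X} -> Prop) : {ffun X -> X} -> Prop :=
  | gen_base f : A f -> gen_sg A f
  | gen_comp f g : gen_sg A f -> gen_sg A g -> gen_sg A (rcomp f g).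

(* Main.v *)
Require Import Defs.
From mathcomp Require Import all_boot all_fingroup.
From mathcomp Require Import zify.
Set Implicit Arguments. Unset Strict Implicit. Unset Printing Implicit Defensive.

Section Proof.
Variables (X : finType) (n : nat) (blk : X -> 'I_n).
Hypothesis hne : forall i : 'I_n, exists x, blk x = i.

Local Notation B := (block blk).
Local Notation s i := #|block blk i|.
Definition E (i : 'I_n) := enum (B i).

Lemma s_gt0 i : 0 < s i.
Proof. case: (hne i) => x <-; apply/card_gt0P; exists x; by rewrite inE. Qed.
Lemma size_E i : size (E i) = s i. Proof. by rewrite /E -cardE. Qed.

Definition idx x := index x (E (blk x)).
Lemma idx_lt x : idx x < s (blk x).
Proof. by rewrite /idx -size_E index_mem mem_enum inE. Qed.

Lemma nth_idx x x0 : nth x0 (E (blk x)) (idx x) = x.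
Proof.
rewrite (set_nth_default x) ?size_E ?idx_lt // nth_index // mem_enum inE //.
Qed.

Lemma idx_inj x y : blk x = blk y -> idx x = idx y -> x = y.
Proof. move=> h1 h2; by rewrite -(nth_idx x x) h2 h1 nth_idx. Qed.

Lemma nthE_blk i k y : k < s i -> blk (nth y (E i) k) = i.
Proof.
move=> hk; have: nth y (E i) k \in E i by apply: mem_nth; rewrite size_E.
by rewrite mem_enum inE => /eqP.
Qed.

Lemma nthE_idx i k y : k < s i -> idx (nth y (E i) k) = k.
Proof.
move=> hk; rewrite /idx nthE_blk // index_uniq // ?size_E // enum_uniq //.
Qed.

Definition Gf (p : 'I_n -> 'I_n) : {ffun X -> X} :=
  [ffun x => nth x (E (p (blk x))) (minn (idx x) (s (p (blk x))).-1)].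

Lemma Gf_lt p x : minn (idx x) (s (p (blk x))).-1 < s (p (blk x)).
Proof. have := s_gt0 (p (blk x)); lia. Qed.

Lemma Gf_blk p x : blk (Gf p x) = p (blk x).
Proof. by rewrite ffunE nthE_blk // Gf_lt. Qed.

Lemma Gf_idx p x : idx (Gf p x) = minn (idx x) (s (p (blk x))).-1.
Proof. by rewrite ffunE nthE_idx // Gf_lt. Qed.

Lemma Gf_ext p q : p =1 q -> Gf p = Gf q.
Proof. move=> h; apply/ffunP => x; by rewrite !ffunE h. Qed.

Lemma Gf_id : Gf id = [ffun x => x].
Proof.
apply/ffunP => x; rewrite ffunE; apply: idx_inj; first by rewrite Gf_blk.
rewrite Gf_idx /=; have := idx_lt x; lia.
Qed.

Lemma Gf_comp p1 p2 : (forall i, minn (s i) (s (p2 (p1 i))) <= s (p1 i)) ->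
  rcomp (Gf p1) (Gf p2) = Gf (p2 \o p1).
Proof.
move=> H; apply/ffunP => x; rewrite ffunE; apply: idx_inj; first by rewrite !Gf_blk.
rewrite !Gf_idx !Gf_blk /=.
have := H (blk x); have := idx_lt x; have := s_gt0 (p1 (blk x));
have := s_gt0 (p2 (p1 (blk x))); lia.
Qed.

Lemma Gf_sub p i : Gf p @: B i \subset B (p i).
Proof.
apply/subsetP => y /imsetP [x]; rewrite inE => /eqP hx ->; by rewrite inE Gf_blk hx.
Qed.

Lemma Gf_inj p i : s i <= s (p i) -> {in B i &, injective (Gf p)}.
Proof.
move=> H x y; rewrite !inE => /eqP hx /eqP hy e; apply: idx_inj; first by rewrite hx hy.
have := congr1 idx e; rewrite !Gf_idx hx hy.
have := idx_lt x; have := idx_lt y; rewrite hx hy; lia.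
Qed.

Lemma Gf_onto p i : s (p i) <= s i -> Gf p @: B i = B (p i).
Proof.
move=> H; apply/eqP; rewrite eqEsubset Gf_sub /=.
apply/subsetP => y; rewrite inE => /eqP hy.
have hl : idx y < s i by have := idx_lt y; rewrite hy; lia.
apply/imsetP; exists (nth y (E i) (idx y)); first by rewrite inE nthE_blk.
apply: idx_inj; first by rewrite Gf_blk nthE_blk.
rewrite Gf_idx nthE_blk // nthE_idx //; have := idx_lt y; rewrite hy; lia.
Qed.

Lemma Gf_T p : in_T blk (Gf p).
Proof. move=> i; exists (p i); exact: Gf_sub. Qed.

Lemma Gf_Sigma (p : {perm 'I_n}) : in_Sigma blk (Gf p).
Proof.
split; first exact: Gf_T.
move=> j; case: (hne ((p^-1)%g j)) => x hx; exists x; by rewrite inE Gf_blk hx permKV.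
Qed.

Lemma fbar_Gf p i : fbar blk (Gf p) i = p i.
Proof.
rewrite /fbar; case: pickP => [j Hj | H] /=.
  case: (hne i) => x hx.
  have : Gf p x \in B j by apply: (subsetP Hj); apply: imset_f; rewrite inE hx.
  by rewrite inE Gf_blk hx => /eqP.
by have := H (p i); rewrite Gf_sub.
Qed.

Lemma companion_Gf (pi : 'I_n -> 'I_n) (p : {perm 'I_n}) : p =1 pi ->
  companion blk pi (Gf p).
Proof.
move=> e; split; first exact: Gf_Sigma.
  by move=> i; rewrite fbar_Gf e.
move=> i; rewrite -e; split; [exact: Gf_inj | exact: Gf_onto].
Qed.

Lemma Gf_S (p : {perm 'I_n}) : (forall i, s (p i) = s i) -> in_S blk (Gf p).
Proof.
move=> H; split; first exact: Gf_T.
exists (Gf (p^-1)%g); split; first exact: Gf_T.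
  rewrite Gf_comp ?Gf_id.
    rewrite -Gf_id; apply: Gf_ext => i /=; by rewrite permK.
  move=> i; rewrite permK H; lia.
rewrite Gf_comp ?Gf_id.
  rewrite -Gf_id; apply: Gf_ext => i /=; by rewrite permKV.
move=> i; have := H ((p^-1)%g i); rewrite permKV => <-; lia.
Qed.

End Proof.

Section Proof2.
Variables (X : finType) (n : nat) (blk : X -> 'I_n).
Hypothesis hne : forall i : 'I_n, exists x, blk x = i.
Local Notation B := (block blk).
Local Notation s i := #|block blk i|.
Local Notation bs := (block_sizes blk).
Let P := fun h => in_S blk h \/ in_B blk h.

Lemma tpermE (T : finType) (x y z : T) :
  tperm x y z = if z == x then y else if z == y then x else z.
Proof.
case: tpermP => [->|->|/eqP h1 /eqP h2]; rewrite ?eqxx //.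
  by case: eqP.
by rewrite (negbTE h1) (negbTE h2).
Qed.

Lemma mem_bs i : s i \in bs.
Proof. rewrite /block_sizes mem_sort mem_undup; apply/mapP; exists i => //; by rewrite mem_enum. Qed.

Lemma bs_mem v : v \in bs -> exists i, v = s i.
Proof. rewrite /block_sizes mem_sort mem_undup => /mapP [i _ ->]; by exists i. Qed.

Lemma bs_sorted : sorted ltn bs.
Proof.
by rewrite ltn_sorted_uniq_leq sort_uniq undup_uniq sort_sorted //; exact: leq_total.
Qed.

Lemma level a b : s a < s b -> (forall c, ~~ ((s a < s c) && (s c < s b))) ->
  exists k, [/\ k.+1 < size bs, lsize blk k = s a & lsize blk k.+1 = s b].
Proof.
move=> hab hc.
set k := index (s a) bs; set k' := index (s b) bs.
have hk : k < size bs by rewrite index_mem mem_bs.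
have hk' : k' < size bs by rewrite index_mem mem_bs.
have ek : nth 0 bs k = s a by rewrite nth_index // mem_bs.
have ek' : nth 0 bs k' = s b by rewrite nth_index // mem_bs.
have hmon := sorted_ltn_nth ltn_trans 0 bs_sorted.
have hkk : k < k'.
  case: (ltngtP k k') => // h.
    by have := hmon k' k hk' hk h; rewrite ek ek'; lia.
  by move: ek ek'; rewrite h => ->; lia.
have e : k' = k.+1.
  case: (ltngtP k' k.+1) => //; first lia.
  move=> h; have hk1 : k.+1 < size bs by lia.
  have [c ec] := bs_mem (mem_nth 0 hk1).
  have := hmon k k.+1 hk hk1 (ltnSn k); have := hmon k.+1 k' hk1 hk' h.
  rewrite ek ek' ec => h1 h2; by have := hc c; rewrite h1 h2.
exists k; split; [by rewrite -e | exact: ek | by rewrite /lsize -e ek'].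
Qed.

Lemma tperm_gen a b : s a < s b -> gen_sg P (Gf blk (tperm a b)).
Proof.
move: {2}(s b - s a) (leqnn (s b - s a)) => d.
elim: d a b => [|d IH] a b hd hab; first lia.
case: (boolP [exists c, (s a < s c) && (s c < s b)]).
  case/existsP => c /andP [hac hcb].
  have nab : a != b by apply/eqP => e; move: hab; rewrite e; lia.
  have nac : a != c by apply/eqP => e; move: hac; rewrite e; lia.
  have ncb : c != b by apply/eqP => e; move: hcb; rewrite e; lia.
  have ne := (negbTE nab, negbTE nac, negbTE ncb,
     negbTE (contra_neq esym nab), negbTE (contra_neq esym nac),
     negbTE (contra_neq esym ncb)).
  have -> : Gf blk (tperm a b) =
     rcomp (rcomp (Gf blk (tperm c b)) (Gf blk (tperm a c))) (Gf blk (tperm c b)).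
    rewrite Gf_comp //; last first.
      move=> i /=; case: (eqVneq i a) => [->|nia];
        [|case: (eqVneq i b) => [->|nib]; [|case: (eqVneq i c) => [->|nic]]].
      - rewrite !tpermE ?eqxx ?ne /= ?eqxx ?ne /=; lia.
      - rewrite !tpermE ?eqxx ?ne /= ?eqxx ?ne /=; lia.
      - rewrite !tpermE ?eqxx ?ne /= ?eqxx ?ne /=; lia.
      - rewrite !tpermE ?(negbTE nia) ?(negbTE nib) ?(negbTE nic) /=
          ?(negbTE nia) ?(negbTE nib) ?(negbTE nic); lia.
    rewrite Gf_comp //; last first.
      move=> i /=; case: (eqVneq i a) => [->|nia];
        [|case: (eqVneq i b) => [->|nib]; [|case: (eqVneq i c) => [->|nic]]].
      - rewrite !tpermE ?eqxx ?ne /= ?eqxx ?ne /= ?eqxx ?ne /=; lia.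
      - rewrite !tpermE ?eqxx ?ne /= ?eqxx ?ne /= ?eqxx ?ne /=; lia.
      - rewrite !tpermE ?eqxx ?ne /= ?eqxx ?ne /= ?eqxx ?ne /=; lia.
      - rewrite !tpermE ?(negbTE nia) ?(negbTE nib) ?(negbTE nic) /=
          ?(negbTE nia) ?(negbTE nib) ?(negbTE nic); lia.
    apply: Gf_ext => i /=.
    case: (eqVneq i a) => [->|nia];
        [|case: (eqVneq i b) => [->|nib]; [|case: (eqVneq i c) => [->|nic]]].
    - by rewrite !tpermE ?eqxx ?ne /= ?eqxx ?ne /= ?eqxx ?ne.
    - by rewrite !tpermE ?eqxx ?ne /= ?eqxx ?ne /= ?eqxx ?ne.
    - by rewrite !tpermE ?eqxx ?ne /= ?eqxx ?ne /= ?eqxx ?ne.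
    - by rewrite !tpermE ?(negbTE nia) ?(negbTE nib) ?(negbTE nic) /=
          ?(negbTE nia) ?(negbTE nib) ?(negbTE nic).
  have h1 : gen_sg P (Gf blk (tperm c b)) by apply: IH => //; lia.
  have h2 : gen_sg P (Gf blk (tperm a c)) by apply: IH => //; lia.
  by apply: gen_comp => //; apply: gen_comp.
rewrite negb_exists => /forallP hc.
have [k [hk e1 e2]] := level hab hc.
apply: gen_base; right; exists k; split => //; split; first exact: (Gf_Sigma hne).
exists a, a, b, b; split => //; split.
- by have := Gf_sub hne (tperm a b) a; rewrite tpermL.
- by apply: Gf_inj => //; rewrite tpermL; lia.
- by have := Gf_onto hne (p:=tperm a b) (i:=b); rewrite tpermR; apply; lia.
move=> m hma hmb; exists m.
have hm : tperm a b m = m by rewrite tpermD // eq_sym.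
split => //; first by have := Gf_onto hne (p:=tperm a b) (i:=m); rewrite hm; apply.
by apply: Gf_inj => //; rewrite hm.
Qed.

End Proof2.

Section Proof3.
Variables (X : finType) (n : nat) (blk : X -> 'I_n).
Hypothesis hne : forall i : 'I_n, exists x, blk x = i.
Local Notation B := (block blk).
Local Notation s i := #|block blk i|.
Let P := fun h => in_S blk h \/ in_B blk h.

Lemma perm_gen (p : {perm 'I_n}) : gen_sg P (Gf blk p).
Proof.
move: {2}#|[set i | p i != i]| (leqnn #|[set i | p i != i]|) => d.
elim: d p => [|d IH] p hd.
  apply: gen_base; left; apply: (Gf_S hne) => i.
  move: hd; rewrite leqn0 cards_eq0 => /eqP h0.
  have : i \notin [set i | p i != i] by rewrite h0 inE.
  by rewrite inE negbK => /eqP ->.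
case: (set_0Vmem [set i | p i != i]) => [h0|[y0 hy0]].
  apply: IH; by rewrite h0 cards0.
have hy0' : p y0 != y0 by move: hy0; rewrite inE.
case: (@arg_maxnP _ y0 (fun i => p i != i) (fun i => s i) hy0') => y hy hmax.
set a := (p^-1)%g y.
have hpa : p a = y by rewrite /a permKV.
have nay : a != y.
  by apply/eqP => e; move: hy; rewrite -{1}e hpa eqxx.
have ha : p a != a by rewrite hpa eq_sym.
have hsa : s a <= s y by apply: hmax.
set t := tperm a y.
set p' := (p * t)%g.
have -> : Gf blk p = rcomp (Gf blk p') (Gf blk t).
  rewrite Gf_comp //.
    apply: Gf_ext => i /=; by rewrite /p' permM tpermK.
  move=> i /=; rewrite /p' permM tpermK.
  case: tpermP => [e|e|_ _]; last lia.
  - rewrite e; lia.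
  - have : i = a by apply: (perm_inj (s:=p)); rewrite e hpa.
    move=> ->; rewrite hpa; lia.
apply: gen_comp.
  apply: IH; rewrite -ltnS; apply: leq_trans hd; apply: proper_card.
  apply/properP; split.
    apply/subsetP => i; rewrite !inE /p' permM => H; apply/eqP => e; move: H.
    have nai : a != i.
      by apply/eqP => e2; move: hy; rewrite -hpa e2 !e eqxx.
    have nyi : y != i.
      by apply/eqP => e2; move: hy; rewrite -e2 in e; rewrite e eqxx.
    by rewrite e tpermD // eqxx.
  exists a; first by rewrite inE.
  by rewrite inE /p' permM hpa tpermR eqxx.
case: (ltngtP (s a) (s y)) => h; first exact: (tperm_gen hne).
  lia.
apply: gen_base; left; apply: (Gf_S hne) => i.
by case: tpermP => [->|->|_ _] //; rewrite h.
Qed.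

End Proof3.

Lemma fbar_sub (X : finType) (n : nat) (blk : X -> 'I_n) (f : {ffun X -> X}) i :
  in_T blk f -> f @: block blk i \subset block blk (fbar blk f i).
Proof.
move=> /(_ i) [j hj]; rewrite /fbar; case: pickP => [k hk //|H].
by have := H j; rewrite hj.
Qed.

Theorem lemma4p4 (X : finType) (n : nat) (blk : X -> 'I_n) :
  0 < #|X| ->
  (forall i : 'I_n, exists x, blk x = i) ->
  (forall i j : 'I_n, i <= j -> #|block blk i| <= #|block blk j|) ->
  forall f : {ffun X -> X}, in_Sigma blk f ->
  exists g : {ffun X -> X},
    companion blk (fbar blk f) g /\
    gen_sg (fun h => in_S blk h \/ in_B blk h) g.
Proof.
move=> _ hne _ f [hT hS].
set pi := fbar blk f.
have hsurj : forall j, exists i, pi i == j.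
  move=> j; case: (hS j) => x hx; exists (blk x).
  have : f x \in block blk (pi (blk x)).
    by apply: (subsetP (fbar_sub (blk x) hT)); apply: imset_f; rewrite inE.
  by move: hx; rewrite !inE => /eqP <- /eqP ->.
pose h j := xchoose (hsurj j).
have hK : cancel h pi by move=> j; apply/eqP; exact: (xchooseP (hsurj j)).
have [h' hK1 hK2] := injF_bij (can_inj hK).
have pinj : injective pi.
  have e : pi =1 h' by move=> j; rewrite -{1}(hK2 j) hK.
  by move=> x y; rewrite !e => /(can_inj hK2).
exists (Gf blk (perm pinj)); split.
  by apply: (companion_Gf hne) => i; rewrite permE.
exact: (perm_gen hne).
Qed.
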